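(* Let $n<\infty$ be a positive integer and let $\mathcal{F}$ be a family of (finite) metric spaces each of cardinality at most $n$. Then for all $X,Y\in\mathcal{F}$, $$\widehat{d}_{\mathrm{GH}}(X,Y)\le d_{\mathrm{GH}}(X,Y)\le (2n-1)\,\widehat{d}_{\mathrm{GH}}(X,Y),$$ i.e. the Gromov--Hausdorff distance and the modified Gromov--Hausdorff distance are Lipschitz-equivalent on $\mathcal{F}$ with Lipschitz constant at most $2n-1$.
   Context: For a map $f:X\to Y$ between metric spaces, its distortion is $\operatorname{dis}(f)=\sup_{x,x'\in X}|d_X(x,x')-d_Y(f(x),f(x'))|$. For $f:X\to Y$, $g:Y\to X$, the codistortion is $\operatorname{codis}(f,g)=\sup_{x\in X,y\in Y}|d_X(x,g(y))-d_Y(f(x),y)|$. For compact metric spaces $X,Y$, the Gromov--Hausdorff distance $d_{\mathrm{GH}}(X,Y)$ is the infimum, over metric spaces $Z$ and isometric embeddings of $X$ and $Y$ into $Z$, of the Hausdorff distance in $Z$ between the images; equivalently $d_{\mathrm{GH}}(X,Y)=\frac12\inf_{f:X\to Y,\,g:Y\to X}\max\{\operatorname{dis}(f),\operatorname{dis}(g),\operatorname{codis}(f,g)\}$. The modified Gromov--Hausdorff distance is $\widehat{d}_{\mathrm{GH}}(X,Y)=\frac12\max\{\inf_{f:X\to Y}\operatorname{dis}(f),\inf_{g:Y\to X}\operatorname{dis}(g)\}$. *)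

(* Defs.v *)
From HB Require Import structures.
From mathcomp Require Import all_boot all_order all_algebra.
From mathcomp Require Import all_classical all_reals.
Set Implicit Arguments. Unset Strict Implicit. Unset Printing Implicit Defensive.
Import Order.TTheory GRing.Theory Num.Theory.
Local Open Scope ring_scope.
Local Open Scope classical_set_scope.

Definition is_metric (R : realType) (T : finType) (d : T -> T -> R) : Prop :=
  [/\ (forall x y, 0 <= d x y),
      (forall x y, d x y = 0 <-> x = y),
      (forall x y, d x y = d y x) &
      (forall x y z, d x z <= d x y + d y z)].

Definition dis (R : realType) (X Y : finType) (dX : X -> X -> R) (dY : Y -> Y -> R)
  (f : X -> Y) : R :=
  \big[Num.max/0]_(p : X * X) `|dX p.1 p.2 - dY (f p.1) (f p.2)|.

Definition codis (R : realType) (X Y : finType) (dX : X -> X -> R) (dY : Y -> Y -> R)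
  (f : X -> Y) (g : Y -> X) : R :=
  \big[Num.max/0]_(p : X * Y) `|dX p.1 (g p.2) - dY (f p.1) p.2|.

Definition dGH (R : realType) (X Y : finType) (dX : X -> X -> R) (dY : Y -> Y -> R) : R :=
  2^-1 * inf [set Num.max (dis dX dY fg.1) (Num.max (dis dY dX fg.2) (codis dX dY fg.1 fg.2))
             | fg in [set: (X -> Y) * (Y -> X)]].

Definition mdGH (R : realType) (X Y : finType) (dX : X -> X -> R) (dY : Y -> Y -> R) : R :=
  2^-1 * Num.max (inf [set dis dX dY f | f in [set: X -> Y]])
                 (inf [set dis dY dX g | g in [set: Y -> X]]).

(* Main.v *)
Require Import Defs.
From HB Require Import structures.
From mathcomp Require Import all_boot all_order all_algebra.
From mathcomp Require Import all_classical all_reals.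
From mathcomp Require Import lra zify.
Import Order.TTheory GRing.Theory Num.Theory.
Local Open Scope ring_scope.

Section Basic.
Variables (R : realType) (X Y : finType) (dX : X -> X -> R) (dY : Y -> Y -> R).

Lemma dis_ge0 f : 0 <= dis dX dY f.
Proof. by rewrite /dis; elim/big_ind: _ => //= a b ha hb; rewrite le_max ha. Qed.

Lemma dis_ge f x x' : `|dX x x' - dY (f x) (f x')| <= dis dX dY f.
Proof. exact: (le_bigmax _ (fun p : X * X => `|dX p.1 p.2 - dY (f p.1) (f p.2)|) (x, x')). Qed.

Lemma dis_le f c : 0 <= c -> (forall x x', `|dX x x' - dY (f x) (f x')| <= c) ->
  dis dX dY f <= c.
Proof. by move=> c0 H; apply: bigmax_le => // -[x x'] _; apply: H. Qed.

Lemma codis_le f g c : 0 <= c -> (forall x y, `|dX x (g y) - dY (f x) y| <= c) ->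
  codis dX dY f g <= c.
Proof. by move=> c0 H; apply: bigmax_le => // -[x y] _; apply: H. Qed.

End Basic.

Section Gen.
Variables (R : realType) (X Y : finType) (dX : X -> X -> R) (dY : Y -> Y -> R).
Variables (f : X -> Y) (g : Y -> X) (del : R).
Hypothesis del0 : 0 <= del.
Hypothesis hf : forall x x', `|dX x x' - dY (f x) (f x')| <= del.
Hypothesis hg : forall y y', `|dY y y' - dX (g y) (g y')| <= del.

Definition dZ (z z' : X + Y) : R :=
  match z, z' with
  | inl x, inl x' => dX x x'
  | inr y, inr y' => dY y y'
  | _, _ => 0
  end.

Definition same (z z' : X + Y) : bool :=
  match z, z' with
  | inl _, inl _ => true
  | inr _, inr _ => true
  | _, _ => false
  end.

Definition T (z : X + Y) : X + Y :=
  match z with inl x => inr (f x) | inr y => inl (g y) end.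

Lemma stepT z z' : same z z' -> same (T z) (T z') /\ `|dZ (T z) (T z') - dZ z z'| <= del.
Proof.
case: z => [x|y]; case: z' => [x'|y'] //= _; split => //.
  by rewrite distrC; apply: hf.
by rewrite distrC; apply: hg.
Qed.

Lemma iterT j z z' : same z z' ->
  same (iter j T z) (iter j T z') /\
  `|dZ (iter j T z) (iter j T z') - dZ z z'| <= j%:R * del.
Proof.
move=> s; elim: j => [|j [sj IH]] /=; first by rewrite subrr normr0 mul0r.
have [s1 h1] := stepT _ _ sj; split => //.
apply: le_trans (ler_distD (dZ (iter j T z) (iter j T z')) _ _) _.
rewrite -natr1 mulrDl mul1r; lra.
Qed.

Variables (a b : nat).
Definition rel x y := iter a T (inl x) = iter b T (inr y).

Lemma rel_bound x y x' y' : rel x y -> rel x' y' ->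
  `|dX x x' - dY y y'| <= (a + b)%:R * del.
Proof.
move=> r r'.
have [_ h1] := iterT a (inl x) (inl x') erefl.
have [_ h2] := iterT b (inr y) (inr y') erefl.
rewrite r r' /= in h1.
apply: le_trans (ler_distD (dZ (iter b T (inr y)) (iter b T (inr y'))) _ _) _.
rewrite natrD mulrDl distrC; lra.
Qed.

Hypothesis covX : forall x, exists y, rel x y.
Hypothesis covY : forall y, exists x, rel x y.

Definition f' x := odflt (f x) [pick y | iter a T (inl x) == iter b T (inr y)].
Definition g' y := odflt (g y) [pick x | iter a T (inl x) == iter b T (inr y)].

Lemma rel_f' x : rel x (f' x).
Proof.
rewrite /f'; case: pickP => [y /eqP //|H].
by have [y r] := covX x; move: (H y); rewrite r eqxx.
Qed.

Lemma rel_g' y : rel (g' y) y.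
Proof.
rewrite /g'; case: pickP => [x /eqP //|H].
by have [x r] := covY y; move: (H x); rewrite r eqxx.
Qed.

Lemma construct : Num.max (dis dX dY f') (Num.max (dis dY dX g') (codis dX dY f' g'))
   <= (a + b)%:R * del.
Proof.
have c0 : 0 <= (a + b)%:R * del by apply: mulr_ge0.
rewrite !ge_max; apply/andP; split; [|apply/andP; split].
- by apply: dis_le => // x x'; apply: rel_bound; apply: rel_f'.
- apply: dis_le => // y y'; rewrite distrC; apply: rel_bound; apply: rel_g'.
- by apply: codis_le => // x y; apply: rel_bound; [apply: rel_f'|apply: rel_g'].
Qed.

End Gen.

Section Chain.
Variables (X Y : finType) (f : X -> Y) (g : Y -> X) (n : nat) (x0 : X).
Hypothesis hXn : (#|X| <= n)%N.

Definition side k : {set X + Y} :=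
  if odd k then [set inr y | y : Y] else [set inl x | x : X].
Definition cc k : {set X + Y} := [set iter k (T X Y f g) z | z in side k].

Lemma cc_sub k : cc k.+1 \subset cc k.
Proof.
apply/fintype.subsetP => _ /imsetP[z zs ->]; rewrite iterSr; apply: imset_f.
move: zs; rewrite /side /=; case: (odd k) => /= /imsetP[w _ ->] /=; exact: imset_f.
Qed.

Lemma cc_gt0 k : (0 < #|cc k|)%N.
Proof.
apply/card_gt0P; rewrite /cc /side.
case: (odd k).
  by exists (iter k (T X Y f g) (inr (f x0))); apply: imset_f; apply: imset_f.
by exists (iter k (T X Y f g) (inl x0)); apply: imset_f; apply: imset_f.
Qed.

Lemma cc0 : (#|cc 0| <= n)%N.
Proof.
apply: leq_trans (leq_imset_card _ _) _.
rewrite /side /=; apply: leq_trans (leq_imset_card _ _) _.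
by rewrite cardT -cardE.
Qed.

Lemma exists_stable : exists k, (k < n)%N /\ cc k.+1 = cc k.
Proof.
case: (pselect (exists k, (k < n)%N /\ cc k.+1 = cc k)) => // H.
have dec : forall k, (k < n)%N -> (#|cc k.+1| < #|cc k|)%N.
  move=> k kn; rewrite ltnNge; apply/negP => le.
  apply: H; exists k; split => //; apply/eqP; rewrite eqEcard cc_sub le.
  done.
have ind : forall k, (k <= n)%N -> (#|cc k| + k <= #|cc 0|)%N.
  elim=> [|k IH] kn; first by rewrite addn0.
  have := dec k kn; have := IH (ltnW kn); lia.
have := ind n (leqnn n); have := cc_gt0 n; have := cc0; lia.
Qed.

Lemma exists_ab : exists a b, (a + b <= 2 * n - 1)%N /\ (forall x, exists y, rel X Y f g a b x y) /\ (forall y, exists x, rel X Y f g a b x y).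
Proof.
have [k [kn e]] := exists_stable.
have fw : forall z, z \in side k -> exists2 z', z' \in side k.+1 &
    iter k.+1 (T X Y f g) z' = iter k (T X Y f g) z.
  move=> z zs; have : iter k (T X Y f g) z \in cc k.+1 by rewrite e; apply: imset_f.
  by case/imsetP=> z' z's ez; exists z'.
have bw : forall z, z \in side k.+1 -> exists2 z', z' \in side k &
    iter k (T X Y f g) z' = iter k.+1 (T X Y f g) z.
  move=> z zs; have : iter k.+1 (T X Y f g) z \in cc k by rewrite -e; apply: imset_f.
  by case/imsetP=> z' z's ez; exists z'.
rewrite /side /= in fw bw.
case ok: (odd k); rewrite ok /= in fw bw.
- exists k.+1, k; split; first lia.
  split.
    move=> x; have [|z' /imsetP[y _ ->] ez] := bw (inl x); first exact: imset_f.
    by exists y; rewrite /rel /=; first [exact: ez | exact: (esym ez)].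
  move=> y; have [|z' /imsetP[x _ ->] ez] := fw (inr y); first exact: imset_f.
  by exists x; rewrite /rel /=; first [exact: ez | exact: (esym ez)].
- exists k, k.+1; split; first lia.
  split.
    move=> x; have [|z' /imsetP[y _ ->] ez] := fw (inl x); first exact: imset_f.
    by exists y; rewrite /rel /=; first [exact: ez | exact: (esym ez)].
  move=> y; have [|z' /imsetP[x _ ->] ez] := bw (inr y); first exact: imset_f.
  by exists x; rewrite /rel /=; first [exact: ez | exact: (esym ez)].
Qed.
End Chain.

Local Open Scope classical_set_scope.
Theorem theorem1 (R : realType) (n : nat) (hn : (0 < n)%N)
  (X : finType) (dX : X -> X -> R) (Y : finType) (dY : Y -> Y -> R)
  (hX : is_metric dX) (hY : is_metric dY)
  (hX0 : (0 < #|X|)%N) (hY0 : (0 < #|Y|)%N)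
  (hXn : (#|X| <= n)%N) (hYn : (#|Y| <= n)%N) :
  mdGH dX dY <= dGH dX dY /\ dGH dX dY <= (2 * n - 1)%:R * mdGH dX dY.
Proof.
have [x0 _] := card_gt0P hX0.
have [y0 _] := card_gt0P hY0.
rewrite /mdGH /dGH.
set A := [set dis dX dY f | f in [set: X -> Y]].
set B := [set dis dY dX g | g in [set: Y -> X]].
set S := [set _ | fg in _].
have lbA : has_lbound A by exists 0; move=> _ [f _ <-]; exact: dis_ge0.
have lbB : has_lbound B by exists 0; move=> _ [f _ <-]; exact: dis_ge0.
have neA : A !=set0 by exists (dis dX dY (fun=> y0)); exists (fun=> y0).
have neB : B !=set0 by exists (dis dY dX (fun=> x0)); exists (fun=> x0).
have hA : forall f, inf A <= dis dX dY f by move=> f; exact: (ge_inf lbA) (ex_intro2 _ _ f I erefl).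
have hB : forall g, inf B <= dis dY dX g by move=> g; exact: (ge_inf lbB) (ex_intro2 _ _ g I erefl).
have lbS : has_lbound S.
  exists 0; move=> _ [[f g] _ <-] /=; rewrite le_max dis_ge0 //.
have hS : forall f g, inf S <= Num.max (dis dX dY f)
    (Num.max (dis dY dX g) (codis dX dY f g)).
  by move=> f g; exact: (ge_inf lbS) (ex_intro2 _ _ (f, g) I erefl).
have neS : S !=set0 by eexists; exists ((fun=> y0), (fun=> x0)).
split.
  apply: ler_wpM2l; first by rewrite invr_ge0 ler0n.
  rewrite ge_max; apply/andP; split; apply: lb_le_inf => //.
    move=> _ [[f g] _ <-] /=. refine (le_trans (hA f) _); rewrite le_max lexx //.
  move=> _ [[f g] _ <-] /=; apply: (le_trans (hB g)).
  by rewrite le_max orbC le_max lexx.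
apply/ler_addgt0Pr => e e0.
set N : R := (2 * n - 1)%:R.
have N1 : 1 <= N by rewrite /N ler1n; lia.
have N0 : 0 < N by apply: lt_le_trans N1.
have e'0 : 0 < e / N by apply: divr_gt0.
have [_ [f _ <-] hf] := inf_adherent e'0 (conj neA lbA).
have [_ [g _ <-] hg] := inf_adherent e'0 (conj neB lbB).
set del := Num.max (dis dX dY f) (dis dY dX g).
have del0 : 0 <= del by rewrite le_max dis_ge0.
have hf' : forall x x', `|dX x x' - dY (f x) (f x')| <= del.
  by move=> x x'; apply: le_trans (dis_ge _ _ _ dX dY f x x') _; rewrite le_max lexx.
have hg' : forall y y', `|dY y y' - dX (g y) (g y')| <= del.
  by move=> y y'; apply: le_trans (dis_ge _ _ _ dY dX g y y') _; rewrite le_max lexx orbT.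
have [a [b [hab [cX cY]]]] := @exists_ab X Y f g n x0 hXn.
have C := @construct _ _ _ dX dY f g del del0 hf' hg' a b cX cY.
have iS : inf S <= N * del.
  apply: le_trans (hS _ _) _; apply: le_trans C _; apply: ler_wpM2r => //.
  by rewrite /N ler_nat.
set M := Num.max (inf A) (inf B).
have dM : del <= M + e / N.
  rewrite /del /M ge_max; apply/andP; split.
    by apply: le_trans (ltW hf) _; rewrite lerD2r le_max lexx.
  by apply: le_trans (ltW hg) _; rewrite lerD2r le_max lexx orbT.
have : N * del <= N * M + e.
  have -> : e = N * (e / N) by rewrite mulrCA divff ?mulr1 // gt_eqF.
  by rewrite -mulrDr; apply: ler_wpM2l => //; apply: ltW.
move=> h2.
have : inf S <= N * M + e by apply: le_trans iS h2.
lra.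
Qed.
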